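(* Let $V$ be a finite set of INF sentences over a vocabulary $\Sigma$ and let $\tilde I$ be a four-valued $\Sigma$-structure with domain $D$. Then $\mathrm{tf}(\lim_{O(V)}(\tilde I)) = \mathrm{glb}_{\le_t}\{M \mid M \text{ a two-valued } \mathrm{tf}(\Sigma)\text{-structure with domain } D,\ M\models\Delta_V,\ \mathrm{tf}(\tilde I)\le_t M\}$, where $O(V)=\{O_\varphi\mid\varphi\in V\}$.
   Context: Vocabularies are finite sets of predicate symbols (equality interpreted as identity). Truth values $\mathbf{t},\mathbf{f},\mathbf{u},\mathbf{i}$; inverse swaps $\mathbf{t},\mathbf{f}$ and fixes $\mathbf{u},\mathbf{i}$. Truth order $\le_t$: $\mathbf{f}\le_t\mathbf{u}\le_t\mathbf{t}$, $\mathbf{f}\le_t\mathbf{i}\le_t\mathbf{t}$. Precision order $\le_p$: $\mathbf{u}\le_p\mathbf{t}\le_p\mathbf{i}$, $\mathbf{u}\le_p\mathbf{f}\le_p\mathbf{i}$. A four-valued $\Sigma$-structure $\tilde I$ has domain $D$ and assigns each $P/n\in\Sigma$ a function $P^{\tilde I}:D^n\to\{\mathbf{t},\mathbf{f},\mathbf{u},\mathbf{i}\}$; two-valued structures are identified with ordinary structures. $\le_p$ on structures is pointwise. Formula values $\tilde I\theta(\varphi)$: atoms via $P^{\tilde I}$, $\neg$ by inverse, $\wedge,\forall$ by $\le_t$-glb, $\vee,\exists$ by $\le_t$-lub. For two-valued structures over the same vocabulary and domain, $M\le_t M'$ means $P^M\subseteq P^{M'}$ for every predicate, and $\mathrm{glb}_{\le_t}$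 is pointwise intersection. Encoding: $\mathrm{tf}(\Sigma)=\{P^{ct}/n,P^{cf}/n\mid P/n\in\Sigma\}$; $\mathrm{tf}(\tilde I)$ is the two-valued $\mathrm{tf}(\Sigma)$-structure with domain $D$ and $(P^{ct})^{\mathrm{tf}(\tilde I)}=\{\overline{d}\mid P^{\tilde I}(\overline{d})\ge_p\mathbf{t}\}$, $(P^{cf})^{\mathrm{tf}(\tilde I)}=\{\overline{d}\mid P^{\tilde I}(\overline{d})\ge_p\mathbf{f}\}$. For formulas over $\Sigma$, $\varphi^{ct}$ and $\varphi^{cf}$ are defined by simultaneous induction: $(P(\overline{x}))^{ct}=P^{ct}(\overline{x})$, $(P(\overline{x}))^{cf}=P^{cf}(\overline{x})$; $(\neg\varphi)^{ct}=\varphi^{cf}$, $(\neg\varphi)^{cf}=\varphi^{ct}$; $(\varphi\wedge\psi)^{ct}=\varphi^{ct}\wedge\psi^{ct}$, $(\varphi\wedge\psi)^{cf}=\varphi^{cf}\vee\psi^{cf}$; $(\varphi\vee\psi)^{ct}=\varphi^{ct}\vee\psi^{ct}$, $(\varphi\vee\psi)^{cf}=\varphi^{cf}\wedge\psi^{cf}$; $(\forall x\varphi)^{ct}=\forall x\varphi^{ct}$, $(\forall x\varphi)^{cf}=\exists x\varphi^{cf}$; $(\exists x\varphi)^{ct}=\exists x\varphi^{ct}$, $(\exists x\varphi)^{cf}=\forall x\varphi^{cf}$. INF sentences: $\forall\overline{x}(\psi\supset L[\overline{x}])$ with $\psi$ having free variables among $\overline{x}$ and $L$ one of $P(\overline{x}),\neg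 P(\overline{x})$. INF propagator $O_\varphi$: $O_\varphi(\tilde I)$ agrees with $\tilde I$ except that for each $\overline{d}$ with $\tilde I[\overline{x}/\overline{d}](\psi)\ge_p\mathbf{t}$, $P^{O_\varphi(\tilde I)}(\overline{d})=\mathrm{lub}_{\le_p}\{\mathbf{t},P^{\tilde I}(\overline{d})\}$ (resp. with $\mathbf{f}$ if $L$ is negative). A $W$-refinement sequence from $\tilde I$ (for a set $W$ of operators) is a (possibly transfinite) sequence $\langle\tilde J_\xi\rangle_{\xi\le\alpha}$ with $\tilde J_0=\tilde I$, $\tilde J_{\xi+1}=O(\tilde J_\xi)$ for some $O\in W$, $\tilde J_\xi<_p\tilde J_{\xi+1}$, and $\le_p$-lubs at limits; stabilizing if $O(\tilde J_\alpha)=\tilde J_\alpha$ for all $O\in W$. For $W=O(V)$ all stabilizing sequences from $\tilde I$ have the same last element $\lim_{O(V)}(\tilde I)$. Rule sets: $\Delta_V=\{\forall\overline{x}\,((L[\overline{x}])^{ct}\leftarrow\psi^{ct})\mid\forall\overline{x}(\psi\supset L[\overline{x}])\in V\}$, where $(P(\overline{x}))^{ct}=P^{ct}(\overline{x})$ and $(\neg P(\overline{x}))^{ct}=P^{cf}(\overline{x})$. For a rule set $\Delta$ over $\mathrm{tf}(\Sigma)$, the operator $T_\Delta$ on two-valued $\mathrm{tf}(\Sigma)$-structures is: $\overline{d}\in Q^{T_\Delta(M)}$ iff $\overline{d}\in Q^M$ or there is a rule $\forall\overline{x}(Q(\overline{x})\leftarrow\chi)$ in $\Delta$ with $M[\overline{x}/\overline{d}]\models\chi$.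 $M\models\Delta$ iff $M$ is a fixpoint of $T_\Delta$. *)

(* Defs.v *)
From mathcomp Require Import all_boot.
From Stdlib Require Import ClassicalDescription.
From Stdlib Require List.
Set Implicit Arguments.
Unset Strict Implicit.
Unset Printing Implicit Defensive.

Definition dec (P : Prop) : bool :=
  if excluded_middle_informative P then true else false.

Inductive FV : Type := Vt | Vf | Vu | Vi.

Definition inv (a : FV) : FV :=
  match a with Vt => Vf | Vf => Vt | Vu => Vu | Vi => Vi end.

Definition le_t (a b : FV) : bool :=
  match a, b with
  | Vf, _ => true | _, Vt => true
  | Vu, Vu => true | Vi, Vi => true
  | _, _ => false end.

Definition le_p (a b : FV) : bool :=
  match a, b with
  | Vu, _ => true | _, Vi => true
  | Vt, Vt => true | Vf, Vf => true
  | _, _ => false end.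

Definition glb_t2 (a b : FV) : FV :=
  match a, b with
  | Vf, _ => Vf | _, Vf => Vf
  | Vt, x => x | x, Vt => x
  | Vu, Vu => Vu | Vi, Vi => Vi
  | _, _ => Vf end.
Definition lub_t2 (a b : FV) : FV :=
  match a, b with
  | Vt, _ => Vt | _, Vt => Vt
  | Vf, x => x | x, Vf => x
  | Vu, Vu => Vu | Vi, Vi => Vi
  | _, _ => Vt end.

Definition lub_p2 (a b : FV) : FV :=
  match a, b with
  | Vu, x => x | x, Vu => x
  | Vt, Vt => Vt | Vf, Vf => Vf
  | _, _ => Vi end.

Definition glb_tD (D : Type) (f : D -> FV) : FV :=
  if dec (exists d, f d = Vf) then Vf
  else if dec ((exists d, f d = Vu) /\ (exists d, f d = Vi)) then Vf
  else if dec (exists d, f d = Vu) then Vu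
  else if dec (exists d, f d = Vi) then Vi
  else Vt.
Definition lub_tD (D : Type) (f : D -> FV) : FV :=
  if dec (exists d, f d = Vt) then Vt
  else if dec ((exists d, f d = Vu) /\ (exists d, f d = Vi)) then Vt
  else if dec (exists d, f d = Vu) then Vu
  else if dec (exists d, f d = Vi) then Vi
  else Vf.

(* A vocabulary is a finite type S of predicate symbols with arities ar.
   Variables are natural numbers. *)
Inductive form (S : Type) (ar : S -> nat) : Type :=
| Atom (P : S) (xs : (ar P).-tuple nat)
| Neg of @form S ar
| And of @form S ar & @form S ar
| Or of @form S ar & @form S ar
| All of nat & @form S ar
| Ex of nat & @form S ar.

Arguments form : clear implicits.
Arguments Atom {S ar} P xs.
Arguments Neg {S ar}.
Arguments And {S ar}.
Arguments Or {S ar}.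
Arguments All {S ar}.
Arguments Ex {S ar}.

Fixpoint fv (S : Type) (ar : S -> nat) (phi : form S ar) : seq nat :=
  match phi with
  | Atom _ xs => tval xs
  | Neg a => fv a
  | And a b => fv a ++ fv b
  | Or a b => fv a ++ fv b
  | All x a => [seq y <- fv a | y != x]
  | Ex x a => [seq y <- fv a | y != x]
  end.

Definition upd (D : Type) (th : nat -> D) (x : nat) (d : D) : nat -> D :=
  fun y => if y == x then d else th y.
Fixpoint upds (D : Type) (th : nat -> D) (xs : seq nat) (ds : seq D) : nat -> D :=
  match xs, ds with
  | x :: xs', d :: ds' => upd (upds th xs' ds') x d
  | _, _ => th
  end.

Definition fstruct (S : Type) (ar : S -> nat) (D : Type) :=
  forall P : S, (ar P).-tuple D -> FV.
Arguments fstruct : clear implicits.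
Definition tstruct (S : Type) (ar : S -> nat) (D : Type) :=
  forall P : S, (ar P).-tuple D -> Prop.

Arguments tstruct : clear implicits.

Fixpoint eval4 S ar D (I : fstruct S ar D) (th : nat -> D) (phi : form S ar) : FV :=
  match phi with
  | Atom P xs => I P (map_tuple th xs)
  | Neg a => inv (eval4 I th a)
  | And a b => glb_t2 (eval4 I th a) (eval4 I th b)
  | Or a b => lub_t2 (eval4 I th a) (eval4 I th b)
  | All x a => glb_tD (fun d => eval4 I (upd th x d) a)
  | Ex x a => lub_tD (fun d => eval4 I (upd th x d) a)
  end.

Fixpoint sat2 S ar D (M : tstruct S ar D) (th : nat -> D) (phi : form S ar) : Prop :=
  match phi with
  | Atom P xs => M P (map_tuple th xs)
  | Neg a => ~ sat2 M th a
  | And a b => sat2 M th a /\ sat2 M th b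
  | Or a b => sat2 M th a \/ sat2 M th b
  | All x a => forall d, sat2 M (upd th x d) a
  | Ex x a => exists d, sat2 M (upd th x d) a
  end.

Definition le_pS S ar D (I J : fstruct S ar D) : Prop :=
  forall P ds, le_p (I P ds) (J P ds).
Definition lt_pS S ar D (I J : fstruct S ar D) : Prop :=
  le_pS I J /\ I <> J.
Definition is_lub_pS S ar D (F : fstruct S ar D -> Prop) (L : fstruct S ar D) : Prop :=
  (forall K, F K -> le_pS K L) /\
  (forall L', (forall K, F K -> le_pS K L') -> le_pS L L').

Definition teq S ar D (M N : tstruct S ar D) : Prop :=
  forall P ds, M P ds <-> N P ds.
Definition le_tS S ar D (M N : tstruct S ar D) : Prop :=
  forall P ds, M P ds -> N P ds.
Definition glb_tS S ar D (F : tstruct S ar D -> Prop) : tstruct S ar D :=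
  fun P ds => forall M, F M -> M P ds.

Inductive tfsym (S : Type) : Type := Ct of S | Cf of S.
Arguments Ct {S}.
Arguments Cf {S}.
Arguments tfsym : clear implicits.
Definition tf_ar (S : Type) (ar : S -> nat) (Q : tfsym S) : nat :=
  match Q with Ct P => ar P | Cf P => ar P end.

Definition tf S ar D (I : fstruct S ar D) : tstruct (tfsym S) (tf_ar ar) D :=
  fun Q => match Q return (tf_ar ar Q).-tuple D -> Prop with
           | Ct P => fun ds => le_p Vt (I P ds)
           | Cf P => fun ds => le_p Vf (I P ds)
           end.

Fixpoint tr S ar (pos : bool) (phi : form S ar) : form (tfsym S) (tf_ar ar) :=
  match phi with
  | Atom P xs => if pos then Atom (Ct P) xs else Atom (Cf P) xs
  | Neg a => tr (~~ pos) a
  | And a b => if pos then And (tr true a) (tr true b) else Or (tr false a) (tr false b)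
  | Or a b => if pos then Or (tr true a) (tr true b) else And (tr false a) (tr false b)
  | All x a => if pos then All x (tr true a) else Ex x (tr false a)
  | Ex x a => if pos then Ex x (tr true a) else All x (tr false a)
  end.
Definition ct S ar (phi : form S ar) := tr true phi.
Definition cf S ar (phi : form S ar) := tr false phi.

(* forall xs (psi ⊃ L[xs]) with L = P(xs) if inf_pos, ¬P(xs) otherwise *)
Record INF (S : Type) (ar : S -> nat) := mkINF {
  inf_P : S;
  inf_pos : bool;
  inf_xs : (ar inf_P).-tuple nat;
  inf_psi : form S ar }.

Arguments INF : clear implicits.

Definition wf_INF S ar (phi : INF S ar) : Prop :=
  uniq (tval (inf_xs phi)) /\ {subset fv (inf_psi phi) <= tval (inf_xs phi)}.

Definition Oprop S ar D (phi : INF S ar) (I : fstruct S ar D) : fstruct S ar D :=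
  fun Q ds =>
    if dec (Q = inf_P phi /\
            forall th : nat -> D,
              le_p Vt (eval4 I (upds th (tval (inf_xs phi)) (tval ds)) (inf_psi phi)))
    then lub_p2 (if inf_pos phi then Vt else Vf) (I Q ds)
    else I Q ds.

Definition OV S ar D (V : seq (INF S ar)) (O : fstruct S ar D -> fstruct S ar D) : Prop :=
  exists phi, List.In phi V /\ O = Oprop phi.

(* A (possibly transfinite) sequence <J_xi>_{xi <= alpha} is represented by
   an index type X with a strict well-order lt having a least and a greatest
   element (an ordinal alpha+1, up to isomorphism). *)
Definition is_succ (X : Type) (lt : X -> X -> Prop) (x s : X) : Prop :=
  lt x s /\ forall y, lt x y -> y = s \/ lt s y.

Definition refinement_seq S ar D (W : (fstruct S ar D -> fstruct S ar D) -> Prop)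
  (I : fstruct S ar D) (X : Type) (lt : X -> X -> Prop) (J : X -> fstruct S ar D)
  (bot top : X) : Prop :=
  (forall x, ~ lt x x) /\
  (forall x y z, lt x y -> lt y z -> lt x z) /\
  (forall x y, x = y \/ lt x y \/ lt y x) /\
  well_founded lt /\
  (forall x, x = bot \/ lt bot x) /\
  (forall x, x = top \/ lt x top) /\
  J bot = I /\
  (forall x s, is_succ lt x s ->
     exists O, W O /\ J s = O (J x) /\ lt_pS (J x) (J s)) /\
  (forall x, x <> bot -> (~ exists y, is_succ lt y x) ->
     is_lub_pS (fun K => exists y, lt y x /\ K = J y) (J x)).

Definition stabilizing S ar D (W : (fstruct S ar D -> fstruct S ar D) -> Prop)
  (L : fstruct S ar D) : Prop :=
  forall O, W O -> O L = L.

Definition is_lim S ar D (W : (fstruct S ar D -> fstruct S ar D) -> Prop)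
  (I L : fstruct S ar D) : Prop :=
  exists (X : Type) (lt : X -> X -> Prop) (J : X -> fstruct S ar D) (bot top : X),
    refinement_seq W I lt J bot top /\ J top = L /\ stabilizing W L.

Record rule (S : Type) (ar : S -> nat) := mkRule {
  r_Q : tfsym S;
  r_xs : (tf_ar ar r_Q).-tuple nat;
  r_body : form (tfsym S) (tf_ar ar) }.

Arguments rule : clear implicits.

Definition rule_of S ar (phi : INF S ar) : rule S ar :=
  if inf_pos phi then @mkRule S ar (Ct (inf_P phi)) (inf_xs phi) (ct (inf_psi phi))
  else @mkRule S ar (Cf (inf_P phi)) (inf_xs phi) (ct (inf_psi phi)).

Definition Delta S ar (V : seq (INF S ar)) : seq (rule S ar) := map (@rule_of S ar) V.

Definition T_Delta S ar D (Dl : seq (rule S ar)) (M : tstruct (tfsym S) (tf_ar ar) D)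
  : tstruct (tfsym S) (tf_ar ar) D :=
  fun Q ds => M Q ds \/
    exists r, List.In r Dl /\ r_Q r = Q /\
      forall th : nat -> D, sat2 M (upds th (tval (r_xs r)) (tval ds)) (r_body r).

Definition models S ar D (Dl : seq (rule S ar)) (M : tstruct (tfsym S) (tf_ar ar) D) : Prop :=
  teq (T_Delta Dl M) M.

(* Main.v *)
Require Import Defs.
From mathcomp Require Import all_boot.
From Stdlib Require List.
From Stdlib Require Import ClassicalDescription Classical.

Ltac brute := unfold glb_tD, lub_tD, dec;
  repeat destruct excluded_middle_informative; simpl; split;
  (intros H || idtac);
  repeat match goal with
   | H : exists d, _ |- _ => destruct H
   | H : _ /\ _ |- _ => destruct H end;
  first
  [ done
  | by exfalso
  | (let d := fresh "d" in intro d;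
     let E := fresh "E" in destruct (_ d) eqn:E; try done; exfalso; eauto)
  | (match goal with E : ?f ?x = _ |- exists _, _ => exists x; rewrite E; done end)
  | (match goal with H : forall d, _ , E : ?f ?x = _ |- _ => have := H x; rewrite E; done end)
  | (match goal with H : context[?f ?x] |- _ =>
       let E := fresh "E" in destruct (f x) eqn:E; try done; exfalso; eauto end)
  | (exfalso; match goal with H : forall d, _ , E : ?f ?x = _ |- _ => have := H x; rewrite E; done end)
  ].

Lemma glbD_t D (f : D -> FV) : le_p Vt (glb_tD f) <-> forall d, le_p Vt (f d).
Proof. brute. Qed.
Lemma glbD_f D (f : D -> FV) : le_p Vf (glb_tD f) <-> exists d, le_p Vf (f d).
Proof. brute. Qed.
Lemma lubD_t D (f : D -> FV) : le_p Vt (lub_tD f) <-> exists d, le_p Vt (f d).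
Proof. brute. Qed.
Lemma lubD_f D (f : D -> FV) : le_p Vf (lub_tD f) <-> forall d, le_p Vf (f d).
Proof. brute. Qed.

Lemma inv_t a : le_p Vt (Defs.inv a) = le_p Vf a. Proof. by case: a. Qed.
Lemma inv_f a : le_p Vf (Defs.inv a) = le_p Vt a. Proof. by case: a. Qed.
Lemma glb2_t a b : le_p Vt (glb_t2 a b) <-> le_p Vt a /\ le_p Vt b.
Proof. case: a; case: b => /=; intuition. Qed.
Lemma glb2_f a b : le_p Vf (glb_t2 a b) <-> le_p Vf a \/ le_p Vf b.
Proof. case: a; case: b => /=; intuition. Qed.
Lemma lub2_t a b : le_p Vt (lub_t2 a b) <-> le_p Vt a \/ le_p Vt b.
Proof. case: a; case: b => /=; intuition. Qed.
Lemma lub2_f a b : le_p Vf (lub_t2 a b) <-> le_p Vf a /\ le_p Vf b.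
Proof. case: a; case: b => /=; intuition. Qed.
Lemma le_p_trans a b c : le_p a b -> le_p b c -> le_p a c.
Proof. by case: a; case: b; case: c. Qed.

Lemma corr S ar D (I : fstruct S ar D) (phi : form S ar) : forall th,
 (le_p Vt (eval4 I th phi) <-> sat2 (tf I) th (tr true phi)) /\
 (le_p Vf (eval4 I th phi) <-> sat2 (tf I) th (tr false phi)).
Proof.
induction phi as [P xs|a IH|a IHa b IHb|a IHa b IHb|x a IH|x a IH] => th /=.
- by split.
- have := inv_t (eval4 I th a); have := inv_f (eval4 I th a); have := IH th; case: (~~ true); simpl; move=> ? -> ->; tauto.
- have := glb2_t (eval4 I th a) (eval4 I th b).
  have := glb2_f (eval4 I th a) (eval4 I th b). have := IHa th. have := IHb th. tauto.
- have := lub2_t (eval4 I th a) (eval4 I th b).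
  have := lub2_f (eval4 I th a) (eval4 I th b). have := IHa th. have := IHb th. tauto.
- rewrite glbD_t glbD_f. split; split.
  + move=> H d; apply/(IH _).1; exact: H.
  + move=> H d; apply/(IH _).1; exact: H.
  + move=> [d H]; exists d; apply/(IH _).2; exact: H.
  + move=> [d H]; exists d; apply/(IH _).2; exact: H.
- rewrite lubD_t lubD_f. split; split.
  + move=> [d H]; exists d; apply/(IH _).1; exact: H.
  + move=> [d H]; exists d; apply/(IH _).1; exact: H.
  + move=> H d; apply/(IH _).2; exact: H.
  + move=> H d; apply/(IH _).2; exact: H.
Qed.

Lemma mono S ar D (M N : tstruct (tfsym S) (tf_ar ar) D) (phi : form S ar) :
  le_tS M N -> forall pos th, sat2 M th (tr pos phi) -> sat2 N th (tr pos phi).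
Proof.
move=> HMN; induction phi as [P xs|a IH|a IHa b IHb|a IHa b IHb|x a IH|x a IH] => pos th /=.
- case: pos => /=; apply: HMN.
- apply: IH.
- case: pos => /= [[h1 h2]|[h1|h2]]; [split|left|right]; auto.
- case: pos => /= [[h1|h2]|[h1 h2]]; [left|right|split]; auto.
- case: pos => /= [H d|[d H]]; [|exists d]; auto.
- case: pos => /= [[d H]|H d]; [exists d|]; auto.
Qed.

Lemma stepM S ar D (V : seq (INF S ar)) (phi : INF S ar) (K : fstruct S ar D)
  (M : tstruct (tfsym S) (tf_ar ar) D) :
  List.In phi V -> models (Delta V) M -> le_tS (tf K) M -> le_tS (tf (Oprop phi K)) M.
Proof.
move=> Hin HM HK Q ds.
have rin : List.In (rule_of phi) (Delta V) by apply: List.in_map.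
case: phi Hin rin => P0 pos xs psi Hin rin.
case: Q ds => P ds /=; rewrite /Oprop /dec /=;
  case: excluded_middle_informative => [[eP Hall]|_] /=; try (apply: (HK (_ P) ds)).
- subst P.
  have fire : forall th, sat2 M (upds th (tval xs) (tval ds)) (ct psi).
    move=> th; rewrite /ct; apply: (mono _ _ _ _ _ _ HK true); apply/((corr _ _ _ K psi _).1); exact: Hall.
  case: pos Hin rin => Hin rin /=.
  + move=> _; apply: (HM (Ct P0) ds).1; right; exists (rule_of {| inf_P := P0; inf_pos := true; inf_xs := xs; inf_psi := psi |}).
    by split.
  + move=> H; apply: (HK (Ct P0) ds) => /=; move: H; by case: (K P0 ds).
- subst P.
  have fire : forall th, sat2 M (upds th (tval xs) (tval ds)) (ct psi).
    move=> th; rewrite /ct; apply: (mono _ _ _ _ _ _ HK true); apply/((corr _ _ _ K psi _).1); exact: Hall.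
  case: pos Hin rin => Hin rin /=.
  + move=> H; apply: (HK (Cf P0) ds) => /=; move: H; by case: (K P0 ds).
  + move=> _; apply: (HM (Cf P0) ds).1; right; exists (rule_of {| inf_P := P0; inf_pos := false; inf_xs := xs; inf_psi := psi |}).
    by split.
Qed.

Theorem proposition4p6 (S : finType) (ar : S -> nat) (V : seq (INF S ar))
  (D : Type) (HD : inhabited D) (I : fstruct S ar D) :
  (forall phi, List.In phi V -> wf_INF phi) ->
  forall L : fstruct S ar D, is_lim (OV V) I L ->
  teq (tf L)
      (glb_tS (fun M : tstruct (tfsym S) (tf_ar ar) D =>
                 models (Delta V) M /\ le_tS (tf I) M)).
Proof.
move=> _ L [X [lt [J [bot [top [Hseq [HJtop Hstab]]]]]]].
case: Hseq => [Hirr [Htr [Htri [Hwfd [Hbot [Htop [HJbot [Hsucc Hlim]]]]]]]].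
have cases : forall x, x = bot \/ (exists y, is_succ lt y x) \/
   (x <> bot /\ ~ exists y, is_succ lt y x).
  move=> x; case: (classic (x = bot)); [by left|move=> nb; right].
  case: (classic (exists y, is_succ lt y x)); [by left| by right].
have IL : forall x, le_pS I (J x).
  apply: (well_founded_ind Hwfd) => x IH.
  case: (cases x) => [->|[[y Hy]|[nb np]]].
  - by rewrite HJbot => P ds; case: (I P ds).
  - have [O [_ [-> [le _]]]] := Hsucc _ _ Hy.
    move=> P ds; apply: le_p_trans (IH y Hy.1 _ ds) (le _ ds).
  - have [ub _] := Hlim x nb np.
    rewrite -HJbot; apply: ub; exists bot; split => //.
    by case: (Hbot x) => // e; case: nb.
have A : forall M, models (Delta V) M -> le_tS (tf I) M -> le_tS (tf L) M.
  move=> M HM HIM.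
  suff C : forall x, le_tS (tf (J x)) M by rewrite -HJtop; exact: C.
  apply: (well_founded_ind Hwfd) => x IH.
  case: (cases x) => [->|[[y Hy]|[nb np]]].
  - by rewrite HJbot.
  - have [O [[phi [Hin ->]] [-> _]]] := Hsucc _ _ Hy.
    exact: (stepM _ _ _ _ _ _ _ Hin HM (IH y Hy.1)).
  - have [ub lub] := Hlim x nb np.
    move=> Q ds; case: (classic (exists y, lt y x /\ tf (J y) ds)).
      by move=> [y [lyx Hy]] _; exact: (IH y lyx _ ds Hy).
    move=> nex; case: Q ds nex => P ds nex /= H.
    + pose L' : fstruct S ar D := fun P es =>
        if dec (forall y, lt y x -> ~ le_p Vt (J y P es)) then Vf else Vi.
      have : le_pS (J x) L'.
        apply: lub => K [y [lyx eK]] Q es; subst K; rewrite /L' /dec.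
        destruct excluded_middle_informative as [h|h]; last by destruct (J y Q es).
        by move: (h y lyx); destruct (J y Q es).
      move=> /(_ P ds); rewrite /L' /dec; destruct excluded_middle_informative as [h|n].
        by move: H; simpl; destruct (J x P ds).
      case: n => y lyx hy; apply: nex; by exists y.
    + pose L' : fstruct S ar D := fun P es =>
        if dec (forall y, lt y x -> ~ le_p Vf (J y P es)) then Vt else Vi.
      have : le_pS (J x) L'.
        apply: lub => K [y [lyx eK]] Q es; subst K; rewrite /L' /dec.
        destruct excluded_middle_informative as [h|h]; last by destruct (J y Q es).
        by move: (h y lyx); destruct (J y Q es).
      move=> /(_ P ds); rewrite /L' /dec; destruct excluded_middle_informative as [h|n].
        by move: H; simpl; destruct (J x P ds).
      case: n => y lyx hy; apply: nex; by exists y.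
have B : models (Delta V) (tf L) /\ le_tS (tf I) (tf L).
  split.
  + move=> Q ds; split; last by left.
    case=> [//|[r [Hin [HQ Hall]]]].
    subst Q.
    have [phi [e Hphi]] := (List.in_map_iff _ _ _).1 Hin; subst r.
    have Hst := Hstab (Oprop phi) (ex_intro _ phi (conj Hphi erefl)).
    clear Hin; case: phi ds Hphi Hst Hall => P pos xs psi ds Hphi Hst.
    case: pos ds Hphi Hst => ds Hphi Hst /= Hall.
    * rewrite -Hst /Oprop /dec /=; destruct excluded_middle_informative as [h|n].
        by case: (L P ds).
      case: n; split => // th; apply/((corr _ _ _ L psi _).1); exact: Hall.
    * rewrite -Hst /Oprop /dec /=; destruct excluded_middle_informative as [h|n].
        by case: (L P ds).
      case: n; split => // th; apply/((corr _ _ _ L psi _).1); exact: Hall.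
  + have := IL top; rewrite HJtop => le.
    case=> P ds; rewrite /tf /= => h; move: (le P ds) h; by case: (I P ds); case: (L P ds).
move=> Q es; split; first by move=> h M [HM HIM]; exact: A.
move=> H; apply: H; exact: B.
Qed.
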